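(* For any $n\geq1$ and any odd $b\geq1$, the set $R_n(b)$ listed in $\prec$ order (increasing) is a $3$-adjacent Gray code: any two consecutive sequences in the list differ in at most $3$ positions, and these positions are consecutive.
   Context: A restricted growth function of length $n$ is an integer sequence $s_1\ldots s_n$ with $s_1=0$ and $0\leq s_{i+1}\leq \max\{s_j\}_{j=1}^i+1$ for $1\leq i\leq n-1$; $R_n$ is the set of these. For an integer $b\geq1$, $R_n(b)=\{s_1\ldots s_n\in R_n: \max_i s_i\leq b\}$. The Reflected Gray Code Order $\prec$ on length-$n$ sequences of nonnegative integers: $s_1\ldots s_n\prec t_1\ldots t_n$ if, for the smallest $k$ with $s_k\neq t_k$, either $\sum_{i=1}^{k-1}s_i$ is even and $s_k<t_k$, or $\sum_{i=1}^{k-1}s_i$ is odd and $s_k>t_k$. A list of same-length sequences is a $d$-Gray code if the Hamming distance (number of differing positions) between successive sequences is at most $d$; it is a $d$-adjacent Gray code if in addition the positions where successive sequences differ are adjacent. *)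

(* Defs.v *)
(* Sequences are [seq nat], positions are 0-indexed. *)
From mathcomp Require Import all_boot.
Set Implicit Arguments. Unset Strict Implicit. Unset Printing Implicit Defensive.

Definition smax (s : seq nat) : nat := foldr maxn 0 s.

(* restricted growth function: s_1 = 0 and s_{i+1} <= max(s_1..s_i) + 1
   (here 0-indexed: s`_0 = 0 and s`_(i+1) <= max(s`_0..s`_i) + 1) *)
Definition is_rgf (s : seq nat) : bool :=
  (nth 0 s 0 == 0) &&
  all (fun i => nth 0 s i.+1 <= (smax (take i.+1 s)).+1) (iota 0 (size s).-1).

Fixpoint all_seqs (n b : nat) : seq (seq nat) :=
  match n with
  | 0 => [:: [::]]
  | n'.+1 => [seq x :: t | x <- iota 0 b.+1, t <- all_seqs n' b]
  end.

Definition Rnb (n b : nat) : seq (seq nat) :=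
  [seq s <- all_seqs n b | is_rgf s && (smax s <= b)].

Definition rgc_lt (s t : seq nat) : bool :=
  has (fun k =>
         [&& all (fun i => nth 0 s i == nth 0 t i) (iota 0 k),
             nth 0 s k != nth 0 t k &
             if odd (sumn (take k s)) then nth 0 t k < nth 0 s k
             else nth 0 s k < nth 0 t k])
      (iota 0 (size s)).

Definition rgc_le (s t : seq nat) : bool := (s == t) || rgc_lt s t.

Definition Rnb_list (n b : nat) : seq (seq nat) := sort rgc_le (Rnb n b).

Definition diff_pos (s t : seq nat) : seq nat :=
  [seq i <- iota 0 (maxn (size s) (size t)) | nth 0 s i != nth 0 t i].

Definition hamming (s t : seq nat) : nat := size (diff_pos s t).

Definition adjacent_pos (s t : seq nat) : Prop :=
  forall i j k, i \in diff_pos s t -> j \in diff_pos s t ->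
    i <= k <= j -> k \in diff_pos s t.

Definition gray_code (d : nat) (L : seq (seq nat)) : Prop :=
  forall i, i.+1 < size L -> hamming (nth [::] L i) (nth [::] L i.+1) <= d.

Definition adjacent_gray_code (d : nat) (L : seq (seq nat)) : Prop :=
  gray_code d L /\
  forall i, i.+1 < size L -> adjacent_pos (nth [::] L i) (nth [::] L i.+1).

(* Main.v *)
Require Import Defs.
From mathcomp Require Import all_boot zify.

Fixpoint gltp (p : bool) (s t : seq nat) : bool :=
  match s, t with
  | x :: s', y :: t' => if x == y then gltp (p (+) odd x) s' t'
                        else (if p then y < x else x < y)
  | _, _ => false
  end.

Lemma gltp_flip p s t : gltp (~~ p) s t = gltp p t s.
Proof.
elim: s t p => [|x s IH] [|y t] p //=.
rewrite eq_sym; case: eqVneq => [->|nxy]; first by rewrite addNb IH.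
by case: p.
Qed.

Lemma gltp_trans p s t u : gltp p s t -> gltp p t u -> gltp p s u.
Proof.
elim: s p t u => [|x s IH] p [|y t] [|z u] //=.
case: (eqVneq x y) => [exy|nxy]; case: (eqVneq y z) => [eyz|nyz].
- subst; rewrite eqxx; apply: IH.
- subst; rewrite (negbTE nyz) => _ //.
- subst; rewrite (negbTE nxy) => + _ //.
- case: (eqVneq x z) => [exz|nxz]; first by subst; case: p; lia.
  by case: p; lia.
Qed.

Lemma gltp_irr p s : gltp p s s = false.
Proof. by elim: s p => [|x s IH] p //=; rewrite eqxx IH. Qed.

Lemma gltp_anti p s t : gltp p s t -> gltp p t s -> False.
Proof.
elim: s p t => [|x s IH] p [|y t] //=.
rewrite [y == x]eq_sym; case: eqVneq => [->|nxy]; first by apply: IH.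
by case: p; lia.
Qed.

Lemma gltp_total p s t : size s = size t -> [\/ s = t, gltp p s t | gltp p t s].
Proof.
elim: s p t => [|x s IH] p [|y t] //=; first by move=> _; constructor 1.
move=> [] hs; case: (eqVneq x y) => [<-|nxy].
- have [->|h|h] := IH (p (+) odd x) t hs; [constructor 1 | constructor 2 | constructor 3]; by rewrite /= ?eqxx.
- case: p; case: (ltngtP x y) => h; first [by constructor 2 => /= | by constructor 3 => /= | by rewrite h eqxx in nxy].
Qed.

Definition rgcp (p : bool) (s t : seq nat) : bool :=
  has (fun k =>
         [&& all (fun i => nth 0 s i == nth 0 t i) (iota 0 k),
             nth 0 s k != nth 0 t k &
             if p (+) odd (sumn (take k s)) then nth 0 t k < nth 0 s k
             else nth 0 s k < nth 0 t k])
      (iota 0 (size s)).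

Lemma rgc_lt_p s t : rgc_lt s t = rgcp false s t.
Proof. by []. Qed.

Lemma iota1 n : iota 1 n = map succn (iota 0 n).
Proof. by rewrite (iotaDl 1 0). Qed.

Lemma rgcp_gltp p s t : size s = size t -> rgcp p s t = gltp p s t.
Proof.
elim: s p t => [|x s IH] p [|y t] //= [] hs.
rewrite /rgcp /= iota1 has_map /= addbF.
case: (eqVneq x y) => [<-|nxy] /=.
- rewrite -IH // /rgcp; apply: eq_has => k.
  by rewrite /= eqxx /= iota1 all_map oddD addbA.
- rewrite (@eq_has _ _ pred0) ?has_pred0 ?orbF; first by case: p.
  by move=> k /=; rewrite (negbTE nxy).
Qed.

Fixpoint Lg (b k m : nat) : seq (seq nat) :=
  match k with
  | 0 => [:: [::]]
  | k'.+1 => flatten [seq map (cons x) (if odd x then rev (Lg b k' (maxn m x))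
                                        else Lg b k' (maxn m x))
                     | x <- iota 0 (minn b m.+1).+1]
  end.

Fixpoint rg (m : nat) (t : seq nat) : bool :=
  match t with
  | [::] => true
  | y :: t' => (y <= m.+1) && rg (maxn m y) t'
  end.

Lemma Lg_S b k m : Lg b k.+1 m = flatten [seq map (cons x) (if odd x then rev (Lg b k (maxn m x))
                                        else Lg b k (maxn m x))
                     | x <- iota 0 (minn b m.+1).+1].
Proof. by []. Qed.

Lemma mem_Lg b k m t :
  (t \in Lg b k m) = [&& size t == k, rg m t & all (fun x => x <= b) t].
Proof.
elim: k m t => [|k IH] m t.
  by case: t => [|y t]; rewrite /= ?inE //=.
rewrite Lg_S.
apply/idP/idP.
- move/flattenP => [blk /mapP [x xin ->] /mapP [tt tin ->]].
  have tin' : tt \in Lg b k (maxn m x) by case: ifP tin => _ //; rewrite mem_rev.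
  move: tin'; rewrite IH => /and3P [/eqP <- h1 h2] /=.
  have xb : x <= b by move: xin; rewrite mem_iota; lia.
  have xm : x <= m.+1 by move: xin; rewrite mem_iota; lia.
  by rewrite eqxx xb xm h1 h2.
- case: t => [|y t] // /and3P [sz /andP [ym rgt] /andP [yb allt]].
  apply/flattenP; exists (map (cons y) (if odd y then rev (Lg b k (maxn m y)) else Lg b k (maxn m y))).
    by apply/mapP; exists y => //; rewrite mem_iota; lia.
  apply: map_f.
  have : t \in Lg b k (maxn m y) by rewrite IH; rewrite eqSS in sz; apply/and3P; split.
  by case: ifP => _ //; rewrite mem_rev.
Qed.

Lemma smax_le s b : (smax s <= b) = all (fun x => x <= b) s.
Proof. by elim: s => [|x s IH] //=; rewrite geq_max IH. Qed.

Lemma smax_cat s t : smax (s ++ t) = maxn (smax s) (smax t).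
Proof. by elim: s => [|x s IH] /=; rewrite ?max0n // IH maxnA. Qed.

Lemma all_seqs_S n b : all_seqs n.+1 b = [seq x :: t | x <- iota 0 b.+1, t <- all_seqs n b].
Proof. by []. Qed.

Lemma mem_all_seqs n b s :
  (s \in all_seqs n b) = (size s == n) && all (fun x => x <= b) s.
Proof.
elim: n s => [|n IH] s.
  by case: s => [|y s]; rewrite /= ?inE.
rewrite all_seqs_S; apply/allpairsP/idP.
- move=> [[x t] [xin tin ->]].
  move: tin xin; rewrite IH mem_iota => /andP [/eqP sz al] xin.
  by move: xin; rewrite /= sz eqxx al andbT; lia.
- case: s => [|y s] // /andP [sz /andP [yb al]].
  exists (y, s); split; [rewrite mem_iota /=; lia | rewrite IH; rewrite eqSS in sz; rewrite sz // | by []].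
Qed.

Lemma uniq_all_seqs n b : uniq (all_seqs n b).
Proof.
elim: n => [|n IH] //.
rewrite all_seqs_S; apply: allpairs_uniq => //; first exact: iota_uniq.
by move=> [x t] [y u] _ _ /= [-> ->].
Qed.

Lemma rgf_aux t p : 
  all (fun i => nth 0 (p ++ t) (size p + i) <= (smax (take (size p + i) (p ++ t))).+1) (iota 0 (size t))
  = rg (smax p) t.
Proof.
elim: t p => [|y t IH] p //=.
rewrite addn0 nth_cat ltnn subnn /= take_size_cat // iota1 all_map.
congr (_ && _).
have -> : maxn (smax p) y = smax (rcons p y) by rewrite -cats1 smax_cat /= maxn0.
rewrite -(IH (rcons p y)) size_rcons cat_rcons.
by apply: eq_all => i /=; rewrite addSn addnS.
Qed.

Lemma is_rgf_cons x t : is_rgf (x :: t) = (x == 0) && rg x t.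
Proof.
rewrite /is_rgf /=; congr (_ && _).
have := rgf_aux t [:: x]; rewrite /= maxn0 => <-.
by [].
Qed.

Definition Adj (s t : seq nat) : Prop :=
  exists p u v w, [/\ s = p ++ u ++ w, t = p ++ v ++ w, size u = size v,
                      size u <= 3 & all2 (fun a c => a != c) u v].

Lemma Adj_cons x s t : Adj s t -> Adj (x :: s) (x :: t).
Proof. by move=> [p [u [v [w [-> -> h1 h2 h3]]]]]; exists (x :: p), u, v, w. Qed.

Lemma Adj_sym s t : Adj s t -> Adj t s.
Proof.
move=> [p [u [v [w [-> -> h1 h2 h3]]]]]; exists p, v, u, w; split => //; first by rewrite -h1.
elim: u v h1 h3 {h2} => [|a u IH] [|c v] //= [] hs /andP [ac al].
by rewrite eq_sym ac IH.
Qed.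

Lemma Adj1 x y w : x != y -> Adj (x :: w) (y :: w).
Proof. by move=> nxy; exists [::], [:: x], [:: y], w; split => //=; rewrite nxy. Qed.

Fixpoint chain (a : seq nat) (s : seq (seq nat)) : Prop :=
  match s with
  | [::] => True
  | c :: s' => Adj a c /\ chain c s'
  end.

Definition chainL (L : seq (seq nat)) : Prop :=
  match L with [::] => True | a :: s => chain a s end.

Lemma chain_cat a s1 s2 : chain a (s1 ++ s2) <-> chain a s1 /\ chain (last a s1) s2.
Proof.
elim: s1 a => [|c s1 IH] a /=; first by tauto.
rewrite IH; tauto.
Qed.

Lemma chain_rcons a s z : chain a (rcons s z) <-> chain a s /\ Adj (last a s) z.
Proof. by rewrite -cats1 chain_cat /=; tauto. Qed.

Lemma chainL_rcons M x : M != [::] -> (chainL (rcons M x) <-> chainL M /\ Adj (last [::] M) x).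
Proof. case: M => [|m0 M] //= _; exact: chain_rcons. Qed.

Lemma chainL_rev L : chainL L -> chainL (rev L).
Proof.
elim: L => [|x L IH] //; case: L IH => [|c L] IH // [hxc hc].
rewrite rev_cons chainL_rcons; last by rewrite rev_cons; case: (rev L).
split; first exact: IH.
by rewrite rev_cons last_rcons; apply: Adj_sym.
Qed.

Lemma chainL_map x L : chainL L -> chainL (map (cons x) L).
Proof.
case: L => [|a s] //=; elim: s a => [|c s IH] a //= [h1 h2].
by split; [apply: Adj_cons | apply: IH].
Qed.

Lemma chain_nth a s i : chain a s -> i < size s -> Adj (nth [::] (a :: s) i) (nth [::] s i).
Proof.
elim: s a i => [|c s IH] a i //= [h1 h2] hi.
case: i hi => [|i] hi //=.
exact: IH.
Qed.

Lemma Lg_head b k m : exists s, Lg b k m = nseq k 0 :: s.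
Proof.
elim: k m => [|k IH] m; first by exists [::].
rewrite Lg_S /=; have [s ->] := IH (maxn m 0).
by eexists.
Qed.

Fixpoint lst (b k m : nat) : seq nat :=
  match k with
  | 0 => [::]
  | k'.+1 => let c := minn b m.+1 in
             c :: (if odd c then nseq k' 0 else lst b k' (maxn m c))
  end.

Lemma last_rcons_nil (s : seq (seq nat)) z : last [::] (rcons s z) = z.
Proof. exact: last_rcons. Qed.

Lemma last_map_cons x a (s : seq (seq nat)) : last [::] (map (cons x) (a :: s)) = x :: last a s.
Proof. by rewrite /= last_map. Qed.

Lemma Lg_last b k m : last [::] (Lg b k m) = lst b k m.
Proof.
elim: k m => [|k IH] m //.
rewrite Lg_S -addn1 iotaD map_cat flatten_cat /= cats0 last_cat.
have [s e] := Lg_head b k (maxn m (minn b m.+1)).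
rewrite e /=.
case: ifP => oc.
  by rewrite rev_cons map_rcons last_rcons.
rewrite add0n /= last_map -IH e //.
Qed.

Lemma key b k m x : odd b -> ~~ odd x -> x < minn b m.+1 ->
  Adj (x :: lst b k (maxn m x)) (x.+1 :: lst b k (maxn m x.+1)).
Proof.
move=> ob ex hx.
have nx : x != x.+1 by rewrite neq_ltn ltnSn.
case: (ltnP x m) => hxm.
  have -> : maxn m x.+1 = m by apply/maxn_idPl; lia.
  exact: Adj1.
have xm : x = m by lia.
subst x.
have -> : maxn m m.+1 = m.+1 by apply/maxn_idPr.
case: k => [|k]; first exact: Adj1.
have c1 : minn b m.+1 = m.+1 by apply/minn_idPr; lia.
rewrite /= c1 /= ex.
have [bm|bm] : b = m.+1 \/ m.+2 <= b by lia.
  subst b; rewrite (minn_idPl (leqnSn m.+1)) /= ex; exact: Adj1.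
rewrite (minn_idPr bm) /= negbK (negbTE ex).
have -> : maxn m.+1 m.+2 = m.+2 by apply/maxn_idPr.
case: k => [|k].
  by exists [::], [:: m; m.+1], [:: m.+1; m.+2], [::]; split => //=; rewrite !neq_ltn !ltnSn.
have bm3 : m.+2 != b by apply/eqP => e; move: ob; rewrite -e /= negbK (negbTE ex).
have c3 : minn b m.+3 = m.+3 by apply/minn_idPr; lia.
rewrite /= c3 /= negbK ex.
by exists [::], [:: m; m.+1; 0], [:: m.+1; m.+2; m.+3], (nseq k 0); split => //=; rewrite !neq_ltn !ltnSn.
Qed.

Lemma chain_blocks (f : nat -> seq (seq nat)) lo n :
  (forall x, f x != [::]) -> (forall x, chainL (f x)) ->
  (forall x, lo <= x -> x < lo + n -> Adj (last [::] (f x)) (head [::] (f x.+1))) ->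
  chainL (flatten [seq f x | x <- iota lo n.+1]).
Proof.
move=> ne ch tr; elim: n lo tr => [|n IH] lo tr.
  by rewrite /= cats0.
have -> : flatten [seq f x | x <- iota lo n.+2] = f lo ++ flatten [seq f x | x <- iota lo.+1 n.+1] by [].
have IH' : chainL (flatten [seq f x | x <- iota lo.+1 n.+1]).
  by apply: IH => x h1 h2; apply: tr; lia.
have : Adj (last [::] (f lo)) (head [::] (f lo.+1)) by apply: tr; lia.
have := ch lo; have := ne lo.
case: (f lo) => [|a s1] //= _ chs adj.
apply/chain_cat; split => //.
move: IH' adj.
have -> : flatten [seq f x | x <- iota lo.+1 n.+1] = f lo.+1 ++ flatten [seq f x | x <- iota lo.+2 n] by [].
have := ne lo.+1; case: (f lo.+1) => [|h s2] //= _ hch hadj.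
Qed.

Lemma head_rev_nil (L : seq (seq nat)) : head [::] (rev L) = last [::] L.
Proof. by case/lastP: L => [|L z] //; rewrite rev_rcons last_rcons. Qed.

Lemma Lg_ne b k m : Lg b k m != [::].
Proof. by have [s ->] := Lg_head b k m. Qed.

Lemma last_mc x (l : seq (seq nat)) : l != [::] -> last [::] (map (cons x) l) = x :: last [::] l.
Proof. by case: l => [|a l] //= _; rewrite last_map. Qed.

Lemma head_mc x (l : seq (seq nat)) : l != [::] -> head [::] (map (cons x) l) = x :: head [::] l.
Proof. by case: l. Qed.

Lemma rev_ne (l : seq (seq nat)) : l != [::] -> rev l != [::].
Proof. by case: l => [|a l] // _; rewrite rev_cons; case: (rev l). Qed.

Lemma Lg_gray b k m : odd b -> chainL (Lg b k m).
Proof.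
move=> ob; elim: k m => [|k IH] m //.
rewrite Lg_S.
apply: chain_blocks.
- move=> x; have := Lg_ne b k (maxn m x).
  by case: ifP => _; case: (Lg b k (maxn m x)) => //= a s _; rewrite ?rev_cons; case: (rev s).
- by move=> x; apply: chainL_map; case: ifP => _; [apply: chainL_rev|]; apply: IH.
move=> x _; rewrite add0n => hx.
have ne := Lg_ne b k (maxn m x).
have ne1 := Lg_ne b k (maxn m x.+1).
have [sx ex] := Lg_head b k (maxn m x).
have [sx1 ex1] := Lg_head b k (maxn m x.+1).
case: ifP => ox; rewrite /= ox /=.
- rewrite last_mc ?rev_ne // head_mc //.
  rewrite ex ex1 rev_cons last_rcons /=.
  by apply: Adj1; rewrite neq_ltn ltnSn.
- rewrite last_mc // head_mc ?rev_ne // head_rev_nil !Lg_last.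
  by apply: key => //; rewrite ox.
Qed.

Lemma pairwise_rev' (r : rel (seq nat)) s : pairwise r (rev s) = pairwise (fun x y => r y x) s.
Proof.
elim: s => [|x s IH] //.
by rewrite rev_cons -cats1 pairwise_cat allrel1r all_rev IH /= andbT.
Qed.

Lemma pw_blocks (g : nat -> seq (seq nat)) lo n :
  (forall x, pairwise (gltp false) (map (cons x) (g x))) ->
  pairwise (gltp false) (flatten [seq map (cons x) (g x) | x <- iota lo n]).
Proof.
move=> h; elim: n lo => [|n IH] lo //.
have -> : flatten [seq map (cons x) (g x) | x <- iota lo n.+1] =
  map (cons lo) (g lo) ++ flatten [seq map (cons x) (g x) | x <- iota lo.+1 n] by [].
rewrite pairwise_cat IH (h lo) !andbT.
apply/allrelP => a c /mapP [a' _ ->] /flattenP [blk /mapP [x xin ->] /mapP [c' _ ->]].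
move: xin; rewrite mem_iota => /andP [hx _].
have nx : lo != x by rewrite neq_ltn hx.
by rewrite /= (negbTE nx).
Qed.

Lemma eq_pw (r r' : rel (seq nat)) s : r =2 r' -> pairwise r s = pairwise r' s.
Proof. by move=> h; apply: (eq_pairwise h). Qed.

Lemma Lg_pw b k m : pairwise (gltp false) (Lg b k m).
Proof.
elim: k m => [|k IH] m //.
rewrite Lg_S; apply: pw_blocks => x.
rewrite pairwise_map.
rewrite (@eq_pw _ (gltp (odd x))); last by move=> a c /=; rewrite eqxx.
case: ifP => ox; last exact: IH.
rewrite pairwise_rev'.
have -> : pairwise (fun a c => gltp true c a) (Lg b k (maxn m x)) = pairwise (gltp false) (Lg b k (maxn m x)).
  by apply: eq_pw => a c; rewrite -(gltp_flip false).
exact: IH.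
Qed.

Lemma pw_uniq (s : seq (seq nat)) : pairwise (gltp false) s -> uniq s.
Proof.
elim: s => [|x s IH] //= /andP [hx hs]; rewrite IH // andbT.
by apply/negP => xs; move/allP: hx => /(_ x xs); rewrite gltp_irr.
Qed.

Lemma all2_nth (u v : seq nat) j : all2 (fun a c => a != c) u v -> j < size u -> nth 0 u j != nth 0 v j.
Proof.
elim: u v j => [|a u IH] [|c v] j //= /andP [h1 h2] hj.
case: j hj => [|j] hj //=; exact: IH.
Qed.

Lemma Adj_props s t : Adj s t -> hamming s t <= 3 /\ adjacent_pos s t.
Proof.
move=> [p [u [v [w [-> -> h1 h2 h3]]]]].
have E : diff_pos (p ++ u ++ w) (p ++ v ++ w) = iota (size p) (size u).
  rewrite /diff_pos !size_cat -h1 maxnn iotaD iotaD !filter_cat add0n.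
  rewrite (@eq_in_filter _ _ pred0 (iota 0 (size p))); last first.
    by move=> i; rewrite mem_iota /= => hi; rewrite !nth_cat hi eqxx.
  rewrite (@eq_in_filter _ _ predT (iota (size p) (size u))); last first.
    move=> i; rewrite mem_iota => /andP [hi1 hi2].
    have hp : (i < size p) = false by apply/negbTE; rewrite -leqNgt.
    rewrite /= !nth_cat hp -h1 (_ : i - size p < size u); last by lia.
    by apply: all2_nth => //; lia.
  rewrite (@eq_in_filter _ _ pred0 (iota (size p + size u) (size w))); last first.
    move=> i; rewrite mem_iota => /andP [hi1 hi2].
    have hp : (i < size p) = false by apply/negbTE; lia.
    have hu : (i - size p < size u) = false by apply/negbTE; lia.
    by rewrite /= !nth_cat hp hu -h1 hu eqxx.
  by rewrite !filter_pred0 filter_predT cats0.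
rewrite /hamming /adjacent_pos E size_iota; split => // i j k.
rewrite !mem_iota; lia.
Qed.

Lemma rgc_le_g s t : size s = size t -> rgc_le s t = (s == t) || gltp false s t.
Proof. by move=> h; rewrite /rgc_le rgc_lt_p rgcp_gltp. Qed.

Lemma mem_Rnb n b s : 1 <= n ->
  (s \in Rnb n b) = (s \in map (cons 0) (Lg b n.-1 0)).
Proof.
move=> hn; rewrite /Rnb mem_filter mem_all_seqs.
case: s => [|x t].
  rewrite /=; case: n hn => // n _; apply/esym/negbTE/negP => /mapP [? _] //.
case: (eqVneq x 0) => [->|nx].
  rewrite (mem_map (fun a c (h : 0 :: a = 0 :: c) => let: erefl := h in erefl)) mem_Lg.
  rewrite is_rgf_cons smax_le.
  case: n hn => // n _ /=; rewrite eqSS.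
  by case: (size t == n); case: (rg 0 t); case: (all _ t).
rewrite is_rgf_cons (negbTE nx) /=.
by apply/esym/negbTE/negP => /mapP [? _ [e _]]; rewrite e eqxx in nx.
Qed.

Lemma size_G n b s : 1 <= n -> s \in map (cons 0) (Lg b n.-1 0) -> size s = n.
Proof.
move=> hn /mapP [t]; rewrite mem_Lg => /and3P [/eqP h _ _] ->.
by rewrite /= h prednK.
Qed.

Theorem theorem1 (n b : nat) : 1 <= n -> 1 <= b -> odd b ->
  adjacent_gray_code 3 (Rnb_list n b).
Proof.
move=> hn hb ob.
set G := map (cons 0) (Lg b n.-1 0).
have memRG : Rnb n b =i G by move=> s; rewrite mem_Rnb.
have uR : uniq (Rnb n b) by rewrite /Rnb filter_uniq // uniq_all_seqs.
have pwG : pairwise (gltp false) G.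
  rewrite /G pairwise_map (@eq_pw _ (gltp false)); first exact: Lg_pw.
  by move=> a c /=.
have uG : uniq G by apply: pw_uniq.
have pRG : perm_eq (Rnb n b) G by apply: uniq_perm.
pose P := fun s : seq nat => size s == n.
have PG : forall s, s \in G -> P s by move=> s hs; rewrite /P (@size_G n b s hn hs) eqxx.
have PR : forall s, s \in Rnb n b -> P s by move=> s; rewrite memRG; apply: PG.
have eqG : Rnb_list n b = G.
  rewrite /Rnb_list; apply: (@sorted_eq_in _ rgc_le).
  - move=> y x z; rewrite !mem_sort => /PR /eqP hy /PR /eqP hx /PR /eqP hz.
    rewrite !rgc_le_g ?hx ?hy ?hz //.
    case/orP => [/eqP -> //|h1]; case/orP => [/eqP <-|h2]; first by rewrite h1 orbT.
    by rewrite (gltp_trans _ _ _ _ h1 h2) orbT.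
  - move=> x y; rewrite !mem_sort => /PR /eqP hx /PR /eqP hy.
    rewrite !rgc_le_g ?hx ?hy //.
    case/andP; case/orP => [/eqP -> //|h1]; case/orP => [/eqP -> //|h2].
    by case: (gltp_anti _ _ _ h1 h2).
  - apply: (@sort_sorted_in _ P).
      move=> x y /eqP hx /eqP hy; rewrite !rgc_le_g ?hx ?hy //.
      by case: (@gltp_total false x y (etrans hx (esym hy))) => [->|->|->]; rewrite ?eqxx ?orbT.
    by apply/allP => s /PR.
  - apply: (@sub_in_sorted _ P (gltp false)).
      by move=> x y /eqP hx /eqP hy h; rewrite rgc_le_g ?hx ?hy // h orbT.
      by apply/allP => s /PG.
    exact: pairwise_sorted.
  - by rewrite perm_sort.
rewrite eqG.
have chG : chainL G by apply: chainL_map; apply: Lg_gray.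
have hA : forall i, i.+1 < size G -> Adj (nth [::] G i) (nth [::] G i.+1).
  move: chG; rewrite /G; case: (Lg b n.-1 0) => [|a s] //= ch i hi.
  by apply: (chain_nth _ _ _ ch); rewrite ltnS in hi.
by split => i hi; have [] := Adj_props _ _ (hA i hi).
Qed.
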